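(* Let $\Psi$ be the set of vectors of $L$ of the form $r_{\lambda,\beta}=\bigl(\lambda;\,1,\ \theta\frac{-3-|\lambda|^2}{6}+\beta\bigr)$ with $\lambda\in\Lambda$ and $\beta\in\frac12\mathbb Z$ satisfying $2\beta+1\equiv|\lambda|^2\pmod 2$ (each such vector lies in $L$ and has norm $-3$). Then the graph of $\Psi$ is connected: any two elements of $\Psi$ are joined by a finite chain of elements of $\Psi$, consecutive elements $a,b$ of which satisfy $|\langle a,b\rangle|=\sqrt3$.
   Context: Let $\omega=e^{2\pi i/3}$, $\mathcal E=\mathbb Z[\omega]$, $\theta=\omega-\bar\omega=\sqrt{-3}$; Hermitian forms are conjugate-linear in the first variable; $|v|^2=\langle v,v\rangle$. Identify $\mathcal E/\theta\mathcal E=\mathbb F_3$. The complex Leech lattice $\Lambda\subset\mathcal E^{12}$ is the set of vectors $(m+\theta c_i+3z_i)_{i=1}^{12}$ with $m\in\{0,1,-1\}$, $c=(c_i)\in\{0,\pm1\}^{12}$ reducing mod $\theta$ to a codeword of the ternary Golay code $\mathcal C_{12}$, $z_i\in\mathcal E$, $\sum_i z_i\equiv m\pmod\theta$; $\mathcal C_{12}\subset\mathbb F_3^{12}$ has generator matrix $[I_6\mid A]$ with rows of $A$: $(0,1,1,1,1,1)$, $(-1,0,1,-1,-1,1)$, $(-1,1,0,1,-1,-1)$, $(-1,-1,1,0,1,-1)$, $(-1,-1,-1,1,0,1)$, $(-1,1,-1,-1,1,0)$. The form on $\Lambda$ is $\langle u,v\rangle=-\frac13\sum\bar u_iv_i$.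 $H=\mathcal E^2$ with form $u^*\begin{pmatrix}0&\bar\theta\\ \theta&0\end{pmatrix}v$, and $L=\Lambda\oplus H$ with elements written $(\lambda;\alpha,\beta)$, $\lambda\in\Lambda$, $(\alpha,\beta)\in H$. *)

(* Defs.v *)
From HB Require Import structures.
From mathcomp Require Import all_boot all_order all_algebra all_field.
Set Implicit Arguments. Unset Strict Implicit. Unset Printing Implicit Defensive.
Import Order.TTheory GRing.Theory Num.Theory.
Local Open Scope ring_scope.

Definition omega : algC := (-1 + 'i * sqrtC 3) / 2.
Definition theta : algC := omega - omega^*.

Definition isE (x : algC) : Prop := exists a b : int, x = a%:~R + b%:~R * omega.

(* rows of A in the generator matrix [I_6 | A] of the ternary Golay code *)
Definition Arows : seq (seq int) :=
  [:: [:: 0; 1; 1; 1; 1; 1];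
      [:: -1; 0; 1; -1; -1; 1];
      [:: -1; 1; 0; 1; -1; -1];
      [:: -1; -1; 1; 0; 1; -1];
      [:: -1; -1; -1; 1; 0; 1];
      [:: -1; 1; -1; -1; 1; 0]]%R.

Definition golayGen (j : 'I_6) (k : 'I_12) : int :=
  if (k < 6)%N then (k == j :> nat)%:Z
  else nth 0 (nth [::] Arows j) (k - 6)%N.

(* c (integer lift) reduces mod theta (i.e. mod 3 on integers) to a codeword of C12 *)
Definition golay_codeword (c : 'I_12 -> int) : Prop :=
  exists a : 'I_6 -> int, forall k : 'I_12,
    (c k = \sum_(j < 6) a j * golayGen j k %[mod 3])%Z.

Definition inLeech (v : {ffun 'I_12 -> algC}) : Prop :=
  exists (m : int) (c : 'I_12 -> int) (z : 'I_12 -> algC),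
    [/\ m \in [:: 0; 1; -1]%R,
        (forall i, c i \in [:: 0; 1; -1]%R) /\ golay_codeword c,
        (forall i, isE (z i)),
        (exists e, isE e /\ \sum_(i < 12) z i - m%:~R = theta * e) &
        (forall i, v i = m%:~R + theta * (c i)%:~R + 3 * z i)].

Definition leechForm (u v : {ffun 'I_12 -> algC}) : algC :=
  - (1 / 3) * \sum_(i < 12) (u i)^* * v i.

(* L = Lambda (+) H, elements (lambda; alpha, beta) *)
Definition Lvec := ({ffun 'I_12 -> algC} * algC * algC)%type.

Definition LForm (u v : Lvec) : algC :=
  leechForm u.1.1 v.1.1 + (u.1.2)^* * theta^* * v.2 + (u.2)^* * theta * v.1.2.

Definition rvec (l : {ffun 'I_12 -> algC}) (b : algC) : Lvec :=
  (l, 1, theta * ((-3 - leechForm l l) / 6) + b).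

Definition inPsi (x : Lvec) : Prop :=
  exists (l : {ffun 'I_12 -> algC}) (b : algC),
    [/\ inLeech l,
        (2 * b) \is a Num.int,
        ((leechForm l l - (2 * b + 1)) / 2) \is a Num.int &
        x = rvec l b].

Definition psiAdj (a b : Lvec) : bool := `|LForm a b| == sqrtC 3.

(* Main.v *)
Require Import Defs.
From HB Require Import structures.
From mathcomp Require Import all_boot all_order all_algebra all_field.
From mathcomp Require Import ring zify.
Import Order.TTheory GRing.Theory Num.Theory.
Local Open Scope ring_scope.
Set Implicit Arguments. Unset Strict Implicit. Unset Printing Implicit Defensive.
Ltac fld := field; do ?split; rewrite ?pnatr_eq0 ?oppr_eq0 ?mulf_neq0 ?pnatr_eq0 //.

Lemma sqrt3_2 : sqrtC 3 ^+ 2 = 3 :> algC.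
Proof. by rewrite sqrtCK. Qed.
Lemma conj_sqrt3 : (sqrtC 3 : algC)^* = sqrtC 3.
Proof. by apply: conj_Creal; rewrite ger0_real // sqrtC_ge0 ler0n. Qed.

Lemma omega2 : omega ^+ 2 = -1 - omega.
Proof.
rewrite /omega; have h1 := sqrCi algC; have h2 := sqrt3_2.
set i := 'i in h1 *; set s := sqrtC 3 in h2 *.
rewrite (_ : ((-1 + i * s) / 2) ^+ 2 = (1 - 2 * i * s + i^+2 * s^+2)/4); last by fld.
rewrite h1 h2; fld.
Qed.

Lemma omega_rel : omega ^+ 2 + omega + 1 = 0.
Proof. rewrite omega2; ring. Qed.

Lemma conj_omega : omega^* = -1 - omega.
Proof.
rewrite /omega !(rmorphM Num.conj, rmorphD Num.conj, rmorphN Num.conj, rmorph1 Num.conj) /=.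
rewrite conjCi conj_sqrt3 fmorphV /= conjC_nat; fld.
Qed.

Lemma thetaE : theta = 1 + 2 * omega.
Proof. rewrite /theta conj_omega; ring. Qed.

Lemma conj_theta : theta^* = - theta.
Proof. by rewrite /theta (rmorphB Num.conj) /= conjCK opprB. Qed.

Lemma modw (x y k : algC) : x - y = (omega ^+ 2 + omega + 1) * k -> x = y.
Proof. by rewrite omega_rel mul0r => /eqP; rewrite subr_eq0 => /eqP. Qed.

Lemma theta2 : theta ^+ 2 = -3.
Proof. rewrite thetaE; apply: (modw (k := 4)); ring. Qed.

Lemma modt (x y k : algC) : x - y = (theta ^+ 2 + 3) * k -> x = y.
Proof. by rewrite theta2 addNr mul0r => /eqP; rewrite subr_eq0 => /eqP. Qed.

Lemma modg (r x y k : algC) : r = 0 -> x - y = r * k -> x = y.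
Proof. by move=> -> /eqP; rewrite mul0r subr_eq0 => /eqP. Qed.

Lemma theta_neq0 : theta != 0.
Proof. apply/eqP => h; have := theta2; rewrite h expr0n /= => /eqP; rewrite eq_sym oppr_eq0 pnatr_eq0. by []. Qed.

Lemma conj_int (n : int) : (n%:~R : algC)^* = n%:~R.
Proof. exact: (rmorph_int Num.conj). Qed.

Definition Eab (a b : int) : algC := a%:~R + b%:~R * omega.

Lemma isE_Eab a b : isE (Eab a b).
Proof. by exists a, b. Qed.

Lemma conj_Eab a b : (Eab a b)^* = Eab (a - b) (- b).
Proof.
rewrite /Eab (rmorphD Num.conj) (rmorphM Num.conj) /= !conj_int conj_omega.
rewrite !rmorphB /=; ring.
Qed.

Lemma mul_Eab a b c d : Eab a b * Eab c d = Eab (a * c - b * d) (a * d + b * c - b * d).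
Proof.
rewrite /Eab; apply: (modw (k := (b * d)%:~R)); rewrite !(rmorphB, rmorphD, rmorphM) /=; ring.
Qed.

Lemma add_Eab a b c d : Eab a b + Eab c d = Eab (a + c) (b + d).
Proof. by rewrite /Eab !rmorphD /=; ring. Qed.

Lemma opp_Eab a b : - Eab a b = Eab (- a) (- b).
Proof. by rewrite /Eab !rmorphN /=; ring. Qed.

Lemma isE_add x y : isE x -> isE y -> isE (x + y).
Proof. by move=> [a [b ->]] [c [d ->]]; rewrite -/(Eab a b) -/(Eab c d) add_Eab; apply: isE_Eab. Qed.
Lemma isE_opp x : isE x -> isE (- x).
Proof. by move=> [a [b ->]]; rewrite -/(Eab a b) opp_Eab; apply: isE_Eab. Qed.
Lemma isE_sub x y : isE x -> isE y -> isE (x - y).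
Proof. by move=> hx hy; apply: isE_add => //; apply: isE_opp. Qed.
Lemma isE_mul x y : isE x -> isE y -> isE (x * y).
Proof. by move=> [a [b ->]] [c [d ->]]; rewrite -/(Eab a b) -/(Eab c d) mul_Eab; apply: isE_Eab. Qed.
Lemma isE_conj x : isE x -> isE (x^*).
Proof. by move=> [a [b ->]]; rewrite -/(Eab a b) conj_Eab; apply: isE_Eab. Qed.
Lemma isE_int (n : int) : isE n%:~R.
Proof. by exists n, 0; rewrite mul0r addr0. Qed.
Lemma isE_omega : isE omega.
Proof. by exists 0, 1; rewrite mul1r add0r. Qed.
Lemma isE_theta : isE theta.
Proof. by rewrite thetaE; apply: isE_add; [apply: (isE_int 1) | apply: isE_mul; [apply: (isE_int 2)|apply: isE_omega]]. Qed.

Lemma isE_nat (n : nat) : isE n%:R.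
Proof. by exists n%:Z, 0; rewrite mul0r addr0 pmulrn. Qed.

Lemma isE_1 : isE 1.
Proof. by exists 1, 0; rewrite mul0r addr0. Qed.
Lemma isE_0 : isE 0.
Proof. by exists 0, 0; rewrite mul0r addr0. Qed.

Ltac isEt := repeat first [ assumption | apply: isE_1 | apply: isE_0 | apply: isE_omega | apply: isE_int | apply: isE_nat | apply: isE_theta | apply: isE_conj | apply: isE_opp | apply: isE_sub | apply: isE_add | apply: isE_mul ].

Lemma Eab_eq0 a b : Eab a b = 0 -> a = 0 /\ b = 0.
Proof.
move=> h; have hc : Eab (a - b) (- b) = 0 by rewrite -conj_Eab h conjC0.
have : b%:~R * theta = 0 :> algC.
  have -> : b%:~R * theta = Eab a b - Eab (a - b) (- b) by rewrite thetaE /Eab !rmorphB !rmorphN /=; ring.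
  by rewrite h hc subr0.
move/eqP; rewrite mulf_eq0 (negbTE theta_neq0) orbF intr_eq0 => /eqP hb.
by move: h; rewrite /Eab hb mul0r addr0 => /eqP; rewrite intr_eq0 => /eqP.
Qed.

Lemma Eab_inj a b c d : Eab a b = Eab c d -> a = c /\ b = d.
Proof.
move=> h; have : Eab (a - c) (b - d) = 0.
  have -> : Eab (a - c) (b - d) = Eab a b - Eab c d by rewrite /Eab !rmorphB /=; ring.
  by rewrite h subrr.
by case/Eab_eq0 => /eqP; rewrite subr_eq0 => /eqP -> /eqP; rewrite subr_eq0 => /eqP ->.
Qed.

Definition thE (x : algC) : Prop := exists e, isE e /\ x = theta * e.

Lemma theta_Eab a b : theta * Eab a b = Eab (a - 2 * b) (2 * a - b).
Proof. rewrite thetaE /Eab; apply: (modw (k := (2 * b)%:~R)); rewrite !(rmorphB, rmorphD, rmorphM) /=; ring. Qed.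

Lemma thE_Eab a b : thE (Eab a b) <-> (3 %| a + b)%Z.
Proof.
split.
  move=> [e [[c [d ->]]]]; rewrite -/(Eab c d) theta_Eab => /Eab_inj [-> ->].
  by apply/dvdzP; exists (c - d); ring.
move/dvdzP => [k hk]; exists (Eab (2 * k - a) (k - a)); split; first exact: isE_Eab.
rewrite theta_Eab; have -> : b = k * 3 - a by rewrite -hk; ring.
congr Eab; ring.
Qed.

Lemma thE_add x y : thE x -> thE y -> thE (x + y).
Proof. by move=> [e [he ->]] [f [hf ->]]; exists (e + f); split; [apply: isE_add | ring]. Qed.
Lemma thE_opp x : thE x -> thE (- x).
Proof. by move=> [e [he ->]]; exists (- e); split; [apply: isE_opp | ring]. Qed.
Lemma thE_sub x y : thE x -> thE y -> thE (x - y).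
Proof. by move=> hx hy; apply: thE_add => //; apply: thE_opp. Qed.
Lemma thE_mulr x y : thE x -> isE y -> thE (x * y).
Proof. by move=> [e [he ->]] hy; exists (e * y); split; [apply: isE_mul | ring]. Qed.
Lemma thE_mull x y : isE y -> thE x -> thE (y * x).
Proof. by move=> hy hx; rewrite mulrC; apply: thE_mulr. Qed.
Lemma thE_theta x : isE x -> thE (theta * x).
Proof. by move=> hx; exists x. Qed.
Lemma thE_isE x : thE x -> isE x.
Proof. by move=> [e [he ->]]; apply: isE_mul => //; apply: isE_theta. Qed.
Lemma thE_conj x : thE x -> thE (x^*).
Proof. move=> [e [he ->]]; exists (- e^*); split; first by apply/isE_opp/isE_conj.
by rewrite (rmorphM Num.conj) /= conj_theta; ring. Qed.
Lemma thE_int (n : int) : thE n%:~R <-> (3 %| n)%Z.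
Proof. by have := thE_Eab n 0; rewrite /Eab mul0r addr0 addr0. Qed.
Lemma thE_0 : thE 0.
Proof. by exists 0; split; [apply: (isE_int 0) | rewrite mulr0]. Qed.

Lemma gen_dot j l : (3 %| \sum_(k < 12) golayGen j k * golayGen l k)%Z.
Proof. rewrite !big_ord_recr big_ord0 /=; case: j => [[|[|[|[|[|[|//]]]]]] hj]; case: l => [[|[|[|[|[|[|//]]]]]] hl]; vm_compute; reflexivity. Qed.
Lemma gen_sum j : (3 %| \sum_(k < 12) golayGen j k)%Z.
Proof. rewrite !big_ord_recr big_ord0 /=; case: j => [[|[|[|[|[|[|//]]]]]] hj]; vm_compute; reflexivity. Qed.
Lemma gen_sq j : (\sum_(k < 12) golayGen j k * golayGen j k)%R = 6.
Proof. rewrite !big_ord_recr big_ord0 /=; case: j => [[|[|[|[|[|[|//]]]]]] hj]; vm_compute; reflexivity. Qed.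

Definition gS (a : 'I_6 -> int) (k : 'I_12) : int := \sum_(j < 6) a j * golayGen j k.

Lemma golayP c : golay_codeword c <-> exists a, forall k, (3 %| c k - gS a k)%Z.
Proof.
split=> -[a ha]; exists a => k.
  by rewrite -eqz_mod_dvd; apply/eqP; apply: ha.
by apply/eqP; rewrite eqz_mod_dvd; apply: ha.
Qed.

Lemma gS_add a a' k : gS (fun j => a j + a' j) k = gS a k + gS a' k.
Proof. by rewrite /gS -big_split; apply: eq_bigr => j _ /=; ring. Qed.
Lemma gS_opp a k : gS (fun j => - a j) k = - gS a k.
Proof. by rewrite /gS -sumrN; apply: eq_bigr => j _ /=; ring. Qed.

Lemma golay_add c c' : golay_codeword c -> golay_codeword c' -> golay_codeword (fun k => c k + c' k).
Proof.
move=> /golayP [a ha] /golayP [a' ha']; apply/golayP; exists (fun j => a j + a' j) => k.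
have -> : c k + c' k - gS (fun j => a j + a' j) k = (c k - gS a k) + (c' k - gS a' k).
  by rewrite gS_add; ring.
by apply: rpredD.
Qed.

Lemma golay_opp c : golay_codeword c -> golay_codeword (fun k => - c k).
Proof.
move=> /golayP [a ha]; apply/golayP; exists (fun j => - a j) => k.
have -> : - c k - gS (fun j => - a j) k = - (c k - gS a k).
  by rewrite gS_opp; ring.
by rewrite rpredN.
Qed.

Lemma golay_congr c c' : golay_codeword c -> (forall k, 3 %| c' k - c k)%Z -> golay_codeword c'.
Proof.
move=> /golayP [a ha] h; apply/golayP; exists a => k.
by rewrite (_ : c' k - gS a k = (c' k - c k) + (c k - gS a k)); [apply: rpredD | ring].
Qed.

Lemma golay_gen j : golay_codeword (golayGen j).
Proof.
apply/golayP; exists (fun l => (l == j)%:Z) => k.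
rewrite /gS (bigD1 j) //= eqxx mul1r big1 ?addr0 ?subrr //.
by move=> l /negbTE ->; rewrite mul0r.
Qed.

Lemma golay_sum c : golay_codeword c -> (3 %| \sum_(k < 12) c k)%Z.
Proof.
move=> /golayP [a ha].
rewrite (_ : \sum_k c k = \sum_k (c k - gS a k) + \sum_j a j * \sum_k golayGen j k).
  apply: rpredD; first by apply: rpred_sum => k _.
  by apply: rpred_sum => j _; apply: dvdz_mull; apply: gen_sum.
have -> : \sum_j a j * \sum_k golayGen j k = \sum_k gS a k.
  by rewrite /gS exchange_big /=; apply: eq_bigr => j _; rewrite mulr_sumr.
by rewrite sumrB subrK.
Qed.

Lemma golay_dot c c' : golay_codeword c -> golay_codeword c' -> (3 %| \sum_(k < 12) c k * c' k)%Z.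
Proof.
move=> /golayP [a ha] /golayP [a' ha'].
rewrite (_ : \sum_k c k * c' k = \sum_k ((c k - gS a k) * c' k + gS a k * (c' k - gS a' k))
           + \sum_j \sum_l a j * a' l * \sum_k golayGen j k * golayGen l k).
  apply: rpredD.
    by apply: rpred_sum => k _; apply: rpredD; [apply: dvdz_mulr | apply: dvdz_mull].
  by apply: rpred_sum => j _; apply: rpred_sum => l _; apply: dvdz_mull; apply: gen_dot.
have -> : \sum_j \sum_l a j * a' l * \sum_k golayGen j k * golayGen l k = \sum_k gS a k * gS a' k.
  rewrite /gS; under eq_bigr do under eq_bigr do rewrite mulr_sumr.
  under eq_bigr do rewrite exchange_big /=.
  rewrite exchange_big /=; apply: eq_bigr => k _.
  rewrite mulr_suml; apply: eq_bigr => j _; rewrite mulr_sumr; apply: eq_bigr => l _; ring.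
rewrite -big_split /=; apply: eq_bigr => k _; ring.
Qed.

Notation V := {ffun 'I_12 -> algC}.
Notation F := leechForm.

Lemma F_addr u v w : F u (v + w) = F u v + F u w.
Proof. rewrite /leechForm -mulrDr -big_split /=; congr (_ * _); apply: eq_bigr => i _; rewrite ffunE; ring. Qed.
Lemma F_addl u v w : F (u + v) w = F u w + F v w.
Proof. rewrite /leechForm -mulrDr -big_split /=; congr (_ * _); apply: eq_bigr => i _; rewrite ffunE (rmorphD Num.conj); ring. Qed.
Lemma F_0r u : F u 0 = 0.
Proof. by rewrite /leechForm big1 ?mulr0 // => i _; rewrite ffunE mulr0. Qed.
Lemma F_0l u : F 0 u = 0.
Proof. by rewrite /leechForm big1 ?mulr0 // => i _; rewrite ffunE (rmorph0 Num.conj) mul0r. Qed.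
Lemma F_oppr u v : F u (- v) = - F u v.
Proof. by apply/eqP; rewrite -subr_eq0 opprK -F_addr addNr F_0r. Qed.
Lemma F_oppl u v : F (- u) v = - F u v.
Proof. by apply/eqP; rewrite -subr_eq0 opprK -F_addl addNr F_0l. Qed.
Lemma F_conj u v : F v u = (F u v)^*.
Proof.
rewrite /leechForm (rmorphM Num.conj) (rmorph_sum Num.conj) /=; congr (_ * _).
  by rewrite (rmorphN Num.conj) /= fmorph_div /= (rmorph1 Num.conj) conjC_nat.
by apply: eq_bigr => i _; rewrite (rmorphM Num.conj) /= conjCK mulrC.
Qed.
Lemma F_real u : (F u u)^* = F u u.
Proof. by rewrite -F_conj. Qed.
Definition nrm (x : int) : int := let r := (x %% 3)%Z in if r == 2 then -1 else r.
Lemma nrmP x : nrm x \in [:: 0; 1; -1] /\ (3 %| x - nrm x)%Z.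
Proof. rewrite /nrm !inE; case: ifP => /eqP h; lia. Qed.

Definition Leech' (v : V) : Prop :=
  exists (m : int) (c : 'I_12 -> int) (z : 'I_12 -> algC),
    [/\ golay_codeword c, forall i, isE (z i), thE (\sum_(i < 12) z i - m%:~R) &
        forall i, v i = m%:~R + theta * (c i)%:~R + 3 * z i].

Lemma inLeech_Leech' v : inLeech v -> Leech' v.
Proof.
move=> [m [c [z [_ [_ hc] hz [e [he he']] hv]]]].
by exists m, c, z; split => //; exists e.
Qed.

Lemma intr3 (k : int) : (3 * k)%:~R = 3 * k%:~R :> algC.
Proof. by rewrite rmorphM. Qed.

Lemma Leech'_inLeech v : Leech' v -> inLeech v.
Proof.
move=> [m [c [z [hc hz hs hv]]]].
have [hm1 hm2] := nrmP m.
have [k hk] : exists k, m = nrm m + 3 * k by case/dvdzP: hm2 => q hq; exists q; rewrite mulrC -hq; ring.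
pose t i := ((c i - nrm (c i)) %/ 3)%Z.
have ht i : c i = nrm (c i) + 3 * t i.
  by have [_ /divzK h] := nrmP (c i); rewrite /t mulrC h; ring.
exists (nrm m), (fun i => nrm (c i)), (fun i => z i + k%:~R + theta * (t i)%:~R); split.
- exact: hm1.
- split; first by move=> i; have [] := nrmP (c i).
  apply: (golay_congr hc) => i; have [_ h] := nrmP (c i).
  by rewrite -rpredN opprB.
- by move=> i; apply: isE_add; [apply: isE_add => //; apply: isE_int | apply: isE_mul; [apply: isE_theta | apply: isE_int]].
- have h := thE_add hs (thE_add (thE_theta (isE_mul isE_theta (isE_int (- 5 * k)))) (thE_theta (isE_int (\sum_i t i)))).
  suff -> : \sum_(i < 12) (z i + k%:~R + theta * (t i)%:~R) - (nrm m)%:~R =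
     \sum_(i < 12) z i - m%:~R + (theta * (theta * (- 5 * k)%:~R) + theta * (\sum_i t i)%:~R) by apply: h.
  rewrite !big_split /= sumr_const card_ord -mulr_natr.
  rewrite (rmorph_sum (intr : int -> algC)) mulr_sumr /=.
  move: hk; set nm := nrm m => hk; rewrite hk !rmorphD !rmorphM /=.
  have := theta2; rewrite expr2 => h2.
  rewrite mulrA h2; ring.
- move=> i; rewrite hv; move: hk (ht i); set nm := nrm m; set nc := nrm (c i) => hk hti; rewrite hk hti !rmorphD !rmorphM /=; ring.
Qed.

Lemma Leech'_add u v : Leech' u -> Leech' v -> Leech' (u + v).
Proof.
move=> [m [c [z [hc hz hs hu]]]] [n [d [w [hd hw hs' hv]]]].
exists (m + n), (fun k => c k + d k), (fun k => z k + w k); split.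
- exact: golay_add.
- by move=> i; apply: isE_add.
- have := thE_add hs hs'; congr thE; rewrite big_split /= rmorphD /=; ring.
- by move=> i; rewrite ffunE hu hv !rmorphD /=; ring.
Qed.

Lemma Leech'_opp u : Leech' u -> Leech' (- u).
Proof.
move=> [m [c [z [hc hz hs hu]]]].
exists (- m), (fun k => - c k), (fun k => - z k); split.
- exact: golay_opp.
- by move=> i; apply: isE_opp.
- have := thE_opp hs; congr thE; rewrite sumrN /= rmorphN /=; ring.
- by move=> i; rewrite ffunE hu !rmorphN /=; ring.
Qed.

Lemma Leech'_sub u v : Leech' u -> Leech' v -> Leech' (u - v).
Proof. by move=> hu hv; apply: Leech'_add => //; apply: Leech'_opp. Qed.

Lemma conj3 : (3 : algC)^* = 3.
Proof. exact: conjC_nat. Qed.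

Lemma conj_vec (m c : int) (z : algC) :
  (m%:~R + theta * c%:~R + 3 * z)^* = m%:~R - theta * c%:~R + 3 * z^*.
Proof.
rewrite (rmorphD Num.conj) (rmorphD Num.conj) (rmorphM Num.conj theta) (rmorphM Num.conj 3) /=.
by rewrite conj_theta conj3 !conj_int mulNr.
Qed.

Lemma F_thE u v : Leech' u -> Leech' v -> thE (F u v).
Proof.
move=> [m [c [z [hc hz [ez [hez hsz]] hu]]]] [n [d [w [hd hw [ew [hew hsw]] hv]]]].
have [C hC] : exists C, \sum_k c k = C * 3 by apply/dvdzP; apply: golay_sum.
have [D hD] : exists D, \sum_k d k = D * 3 by apply/dvdzP; apply: golay_sum.
have [P hP] : exists P, \sum_k c k * d k = P * 3 by apply/dvdzP; apply: golay_dot.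
have h2 : theta * theta = -3 by rewrite -expr2 theta2.
have key1 : \sum_k (u k)^* * v k = \sum_k ((m * n)%:~R + theta * (m%:~R * (d k)%:~R) - theta * (n%:~R * (c k)%:~R)
   - theta * theta * (c k * d k)%:~R + 3 * (m%:~R * w k) + 3 * (n%:~R * (z k)^*)
   + 3 * theta * ((z k)^* * (d k)%:~R - (c k)%:~R * w k) + 9 * ((z k)^* * w k)).
  apply: eq_bigr => k _.
  by rewrite hu hv conj_vec !rmorphM /=; ring.
have ez' : \sum_k (z k)^* = m%:~R - theta * ez^*.
  rewrite -(rmorph_sum Num.conj) /= -[\sum_k z k](subrK m%:~R) hsz.
  by rewrite (rmorphD Num.conj) (rmorphM Num.conj) /= conj_theta conj_int; ring.
have ew' : \sum_k w k = n%:~R + theta * ew by rewrite -hsw; ring.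
rewrite /leechForm key1 !(big_split, sumrB) /= sumr_const card_ord !sumrN -!mulr_sumr.
rewrite -!(rmorph_sum (intr : int -> algC)) /= hC hD hP ez' ew'.
have hQ : isE (\sum_k (z k)^* * w k).
  by apply: (big_ind isE (isE_int 0) isE_add) => k _; apply: isE_mul; [apply: isE_conj|].
have hY : isE (\sum_k ((z k)^* * (d k)%:~R - (c k)%:~R * w k)).
  apply: (big_ind isE (isE_int 0) isE_add) => k _.
  by apply: isE_sub; apply: isE_mul => //; [apply: isE_conj | apply: isE_int | apply: isE_int].
move: hQ hY; set Q := \sum_k (z k)^* * w k; set Y := (X in 3 * theta * X) => hQ hY.
exists (2 * theta * (m * n)%:~R + theta * P%:~R + theta * Q - (m%:~R * D%:~R - n%:~R * C%:~R)
        - m%:~R * ew + n%:~R * ez^* - Y).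
split.
  have h2' : isE 2 by apply: (isE_int 2).
  have := isE_conj hez; have := isE_theta => hT hez'.
  by isEt.
rewrite !rmorphM /=; apply: (modt (k := - (2 * (m * n)%:~R + Q))); fld.
Qed.


Definition good (l : V) (b : algC) : Prop :=
  inLeech l /\ exists B N : int, 2 * b = B%:~R /\ (F l l - (2 * b + 1)) / 2 = N%:~R.

Lemma inPsi_good x : inPsi x <-> exists l b, good l b /\ x = rvec l b.
Proof.
split.
  move=> [l [b [hl /intrP [B hB] /intrP [N hN] ->]]]; exists l, b; split => //.
  by split => //; exists B, N.
move=> [l [b [[hl [B [N [hB hN]]]] ->]]]; exists l, b; split => //.
  by rewrite hB intr_int.
by rewrite hN intr_int.
Qed.

Lemma norm_theta : `|theta| = sqrtC 3.
Proof.
have h : `|theta| ^+ 2 = 3 by rewrite normCK conj_theta mulrN -expr2 theta2 opprK.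
by rewrite -h sqrCK.
Qed.

Lemma conj_H n b : n^* = n -> b^* = b ->
  (theta * ((-3 - n) / 6) + b)^* = - theta * ((-3 - n) / 6) + b.
Proof.
move=> hn hb.
have hk : ((-3 - n) / 6)^* = (-3 - n) / 6.
  apply: conj_Creal; apply: rpredM; last by rewrite rpredV ger0_real // ler0n.
  by apply: rpredB; [rewrite rpredN ger0_real // ler0n | apply/CrealP].
by rewrite (rmorphD Num.conj) (rmorphM Num.conj) /= hk hb conj_theta.
Qed.

Lemma LForm_rvec l b l' b' : b^* = b -> b'^* = b' ->
  LForm (rvec l b) (rvec l' b') =
  F l l' + (-3 - F l' l') / 2 + (-3 - F l l) / 2 + theta * (b - b').
Proof.
move=> hb hb'; rewrite /LForm /rvec /= conj_H ?F_real // (rmorph1 Num.conj) conj_theta.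
apply: (modt (k := - ((-3 - F l' l') + (-3 - F l l)) / 6)); fld.
Qed.

Lemma step l b d (s : int) : good l b -> Leech' d -> F d d = -6 -> (s = 1 \/ s = -1) ->
  let b' := b + (F l d - (F l d)^*) / (2 * theta) - s%:~R in
  good (l + d) b' /\ psiAdj (rvec l b) (rvec (l + d) b').
Proof.
move=> [hl [B [N [hB hN]]]] hd hdd hs b'.
have hl' := inLeech_Leech' hl.
have [e [[p [q ->]] hx]] := F_thE hl' hd.
have hxc : (F l d)^* = - theta * Eab (p - q) (- q).
  by rewrite hx (rmorphM Num.conj) /= conj_theta -conj_Eab.
have hd1 : (F l d - (F l d)^*) / (2 * theta) = (2 * p - q)%:~R / 2.
  rewrite hxc hx /Eab !rmorphB !rmorphN !rmorphM /=; move: theta_neq0 => h0; fld.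
have hd2 : F l d + (F l d)^* = (- 3 * q)%:~R.
  rewrite hxc hx /Eab !rmorphB !rmorphN !rmorphM /=.
  by apply: (modt (k := q%:~R)); rewrite thetaE; ring.
have hn' : F (l + d) (l + d) = F l l + (- 3 * q)%:~R - 6.
  by rewrite F_addl !F_addr hdd (F_conj l d) -hd2; ring.
have hbr : b^* = b.
  apply: conj_Creal; rewrite (_ : b = B%:~R / 2); last by rewrite -hB; fld.
  by apply: rpredM; [apply: Rreal_int; apply: intr_int | rewrite rpredV ger0_real // ler0n].
have hbr' : b'^* = b'.
  rewrite /b' hd1; apply: conj_Creal; apply: rpredB; last by apply: Rreal_int; apply: intr_int.
  apply: rpredD; first by apply/CrealP.
  by apply: rpredM; [apply: Rreal_int; apply: intr_int | rewrite rpredV ger0_real // ler0n].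
split.
  split; first by apply: Leech'_inLeech; apply: Leech'_add.
  exists (B + (2 * p - q) - 2 * s), (N - q - 3 - p + s); split.
    by rewrite /b' hd1 !(rmorphD, rmorphB, rmorphN, rmorphM) /= -hB; fld.
  rewrite hn' /b' hd1 !(rmorphD, rmorphB, rmorphN, rmorphM) /=.
  have eb : b = B%:~R / 2 by rewrite -hB; fld.
  by rewrite -[N%:~R]hN eb; fld.
rewrite /psiAdj (LForm_rvec l (l + d) hbr hbr') hn' /b' hd1 F_addr.
rewrite (_ : _ + _ = theta * s%:~R).
  by apply/eqP; rewrite normrM norm_theta; case: hs => ->; rewrite ?normrN normr1 mulr1.
apply: (modt (k := q%:~R / 2)); rewrite hx /Eab !(rmorphD, rmorphB, rmorphN, rmorphM) /= thetaE; fld.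
Qed.


Definition conn (a b : Lvec) : Prop :=
  exists s : seq Lvec, [/\ path psiAdj a s, last a s = b & forall x, x \in s -> inPsi x].

Lemma conn_refl a : conn a a.
Proof. by exists [::]. Qed.

Lemma conn_trans a b c : conn a b -> conn b c -> conn a c.
Proof.
move=> [s1 [p1 l1 h1]] [s2 [p2 l2 h2]]; exists (s1 ++ s2); split.
- by rewrite cat_path p1 l1.
- by rewrite last_cat l1.
- by move=> x; rewrite mem_cat => /orP [/h1 | /h2].
Qed.

Lemma conn_step a b : psiAdj a b -> inPsi b -> conn a b.
Proof. by move=> hab hb; exists [:: b]; split => //= [|x]; [rewrite hab | rewrite inE => /eqP ->]. Qed.

Lemma LForm_sym u v : LForm v u = (LForm u v)^*.
Proof.
rewrite /LForm (F_conj u.1.1 v.1.1); have := conj_theta; move: theta => t ht.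
rewrite !(rmorphD Num.conj) !(rmorphM Num.conj) /= !conjCK ht; ring.
Qed.

Lemma psiAdj_sym a b : psiAdj a b = psiAdj b a.
Proof. by rewrite /psiAdj LForm_sym norm_conjC. Qed.

Lemma conn_sym a b : inPsi a -> conn a b -> conn b a.
Proof.
move=> ha [s [p l h]]; elim: s a ha p l h => [|x s IH] a ha /= p l h; first by rewrite -l; apply: conn_refl.
move/andP: p => [hax p].
have hx : inPsi x by apply: h; rewrite inE eqxx.
have h' : forall y, y \in s -> inPsi y by move=> y hy; apply: h; rewrite inE hy orbT.
apply: (conn_trans (IH x hx p l h')).
by apply: conn_step => //; rewrite psiAdj_sym.
Qed.

Definition goodd (d : V) : Prop := Leech' d /\ F d d = -6.

Lemma sum1 (g : 'I_12 -> algC) i : (forall k, k != i -> g k = 0) -> \sum_k g k = g i.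
Proof. by move=> h; rewrite (bigD1 i) //= big1 ?addr0 // => k /h. Qed.

Lemma sum2 (g : 'I_12 -> algC) i j : i != j -> (forall k, k != i -> k != j -> g k = 0) ->
  \sum_k g k = g i + g j.
Proof.
move=> hij h; rewrite (bigD1 i) //= (bigD1 j) 1?eq_sym //= big1 ?addr0 // => k /andP [hki hkj].
exact: h.
Qed.

Definition dlt (i k : 'I_12) : algC := (k == i)%:R.
Definition Tv (i j : 'I_12) (u : algC) : V := [ffun k => 3 * (u * dlt i k - dlt j k)].

Lemma golay0 : golay_codeword (fun _ => 0).
Proof. by apply/golayP; exists (fun _ => 0) => k; rewrite /gS big1 ?subrr // => j _; rewrite mul0r. Qed.

Lemma goodd_T i j u : i != j -> isE u -> thE (u - 1) -> u * u^* = 1 -> goodd (Tv i j u).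
Proof.
move=> hij hu hu1 huu; split.
  exists 0, (fun _ => 0), (fun k => u * dlt i k - dlt j k); split.
  - exact: golay0.
  - by move=> k; rewrite /dlt; case: (k == i); case: (k == j); isEt.
  - rewrite (sum2 hij); last by move=> k hki hkj; rewrite /dlt (negbTE hki) (negbTE hkj) /=; ring.
    rewrite /dlt eqxx (negbTE hij) eq_sym (negbTE hij) eqxx /=.
    by move: hu1; congr thE; ring.
  - by move=> k; rewrite ffunE mulr0 !add0r.
rewrite /leechForm (sum2 hij).
  rewrite !ffunE /dlt eqxx (negbTE hij) eq_sym (negbTE hij) eqxx /= !mulr1 !mulr0 !subr0 !sub0r.
  rewrite !(rmorphM Num.conj) /= conj3 (rmorphN Num.conj) (rmorph1 Num.conj).
  have hr : u * u^* - 1 = 0 by rewrite huu subrr.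
  by apply: (modg (k := -3) hr); fld.
by move=> k hki hkj; rewrite !ffunE /dlt (negbTE hki) (negbTE hkj) /= !mulr0 subr0 !mulr0.
Qed.

Lemma omega_conj_mul : omega * omega^* = 1.
Proof. rewrite conj_omega; apply: (modw (k := -1)); ring. Qed.

Lemma unit1 : [/\ isE 1, thE (1 - 1) & 1 * 1^* = 1 :> algC].
Proof. split; [exact: (isE_int 1) | rewrite subrr; exact: thE_0 | by rewrite (rmorph1 Num.conj) mulr1]. Qed.

Lemma unitw : [/\ isE omega, thE (omega - 1) & omega * omega^* = 1].
Proof.
split; [exact: isE_omega | | exact: omega_conj_mul].
by have := (thE_Eab (-1) 1).2 (dvdz0 _); rewrite /Eab mul1r addrC.
Qed.

Lemma unitw2 : [/\ isE (-1 - omega), thE (-1 - omega - 1) & (-1 - omega) * (-1 - omega)^* = 1].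
Proof.
split; first by isEt.
  have := (thE_Eab (-2) (-1)) .2 isT; rewrite /Eab; congr thE; rewrite !rmorphN /=; ring.
rewrite (rmorphB Num.conj) (rmorphN Num.conj) (rmorph1 Num.conj) /= conj_omega.
apply: (modw (k := -1)); ring.
Qed.

Definition Thv (j : 'I_6) : V := [ffun k => theta * (golayGen j k)%:~R].

Lemma goodd_Th j : goodd (Thv j).
Proof.
split.
  exists 0, (golayGen j), (fun _ => 0); split.
  - exact: golay_gen.
  - by move=> k; apply: (isE_int 0).
  - by rewrite big1 // subrr; apply: thE_0.
  - by move=> k; rewrite ffunE mulr0 add0r addr0.
rewrite /leechForm (eq_bigr (fun k => 3 * (golayGen j k * golayGen j k)%:~R)).
  by rewrite -mulr_sumr -rmorph_sum /= gen_sq; fld.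
move=> k _; rewrite ffunE (rmorphM Num.conj) /= conj_theta conj_int rmorphM /=.
have := theta2; rewrite expr2 => h2.
by rewrite mulrACA mulNr h2 opprK.
Qed.

Definition w0 : V := [ffun k : 'I_12 => if (k < 2)%N then -2 else 1].

Lemma goodd_w0 : goodd w0.
Proof.
have h01 : (@Ordinal 12 0 isT) != (@Ordinal 12 1 isT) by [].
split.
  exists 1, (fun _ => 0), (fun k : 'I_12 => if (k < 2)%N then -1 else 0); split.
  - exact: golay0.
  - by move=> k; case: ifP => _; [apply: (isE_int (-1)) | apply: (isE_int 0)].
  - rewrite (sum2 h01) /=; last by move=> k; case: k => [[|[|k]] hk] //.
    by have := (thE_int (-3)).2 isT; congr thE; rewrite ?rmorphN /=; ring.
  - by move=> k; rewrite ffunE mulr0 addr0; case: ifP => _; ring.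
rewrite /leechForm (eq_bigr (fun k : 'I_12 => 1 + (if (k < 2)%N then 3 else 0))).
  rewrite big_split /= sumr_const card_ord (sum2 h01) /=; last by move=> k; case: k => [[|[|k]] hk] //.
  fld.
move=> k _; rewrite ffunE; case: ifP => _.
  by rewrite (conj_int (-2)); ring.
by rewrite (conj_int 1); ring.
Qed.

Definition Sp (v : V) : Prop :=
  exists ds : seq V, (forall d, d \in ds -> goodd d) /\ v = \sum_(d <- ds) d.

Lemma Sp0 : Sp 0.
Proof. by exists [::]; rewrite big_nil. Qed.

Lemma Sp_gen d : goodd d -> Sp d.
Proof. by move=> h; exists [:: d]; rewrite big_seq1; split => // x; rewrite inE => /eqP ->. Qed.

Lemma Sp_add u v : Sp u -> Sp v -> Sp (u + v).
Proof.
move=> [s1 [h1 ->]] [s2 [h2 ->]]; exists (s1 ++ s2); rewrite big_cat; split => // x.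
by rewrite mem_cat => /orP [/h1 | /h2].
Qed.

Lemma goodd_opp d : goodd d -> goodd (- d).
Proof. by move=> [h1 h2]; split; [apply: Leech'_opp | rewrite F_oppl F_oppr opprK]. Qed.

Lemma Sp_opp u : Sp u -> Sp (- u).
Proof.
move=> [s [h ->]]; exists (map (fun d => - d) s); rewrite big_map sumrN; split => // x.
by move/mapP => [y hy ->]; apply: goodd_opp; apply: h.
Qed.

Lemma Sp_sub u v : Sp u -> Sp v -> Sp (u - v).
Proof. by move=> hu hv; apply: Sp_add => //; apply: Sp_opp. Qed.

Lemma Sp_sum (I : finType) (f : I -> V) : (forall i, Sp (f i)) -> Sp (\sum_i f i).
Proof. by move=> h; apply: (big_ind Sp Sp0 Sp_add) => i _. Qed.

Definition sc (x : algC) (v : V) : V := [ffun k => x * v k].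

Lemma Sp_sc (n : int) v : Sp v -> Sp (sc n%:~R v).
Proof.
move=> hv.
have hn : forall k : nat, Sp (sc k%:R v).
  elim=> [|k IH].
    have -> : sc 0%:R v = 0 by apply/ffunP => i; rewrite !ffunE mul0r.
    exact: Sp0.
  rewrite (_ : sc k.+1%:R v = sc k%:R v + v); first by apply: Sp_add.
  by apply/ffunP => i; rewrite !ffunE mulrSr; ring.
case: n => k.
  have -> : (Posz k)%:~R = k%:R :> algC by rewrite pmulrn.
  exact: hn.
rewrite (_ : sc (Negz k)%:~R v = - sc k.+1%:R v); first by apply: Sp_opp.
by apply/ffunP => i; rewrite !ffunE NegzE rmorphN /= mulNr.
Qed.

Definition e3 (i : 'I_12) (x : algC) : V := [ffun k => 3 * x * dlt i k].
Definition i0 : 'I_12 := @Ordinal 12 0 isT.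
Definition i1 : 'I_12 := @Ordinal 12 1 isT.
Definition E0 := e3 i0 1.

Lemma Sp_e3_1 i : Sp (e3 i 1 - E0).
Proof.
have [->|hi] := eqVneq i i0; first by rewrite /E0 subrr; apply: Sp0.
have [h1 h2 h3] := unit1.
rewrite (_ : _ - _ = Tv i i0 1); first by apply: Sp_gen; apply: goodd_T.
by apply/ffunP => k; rewrite !ffunE; ring.
Qed.

Lemma Sp_e3_w i : Sp (e3 i omega - E0).
Proof.
have [h1 h2 h3] := unitw; have [u1 u2 u3] := unit1.
have [->|hi] := eqVneq i i0.
  rewrite (_ : _ - _ = Tv i0 i1 omega + Tv i1 i0 1).
    by apply: Sp_add; apply: Sp_gen; apply: goodd_T.
  by apply/ffunP => k; rewrite !ffunE; ring.
rewrite (_ : _ - _ = Tv i i0 omega); first by apply: Sp_gen; apply: goodd_T.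
by apply/ffunP => k; rewrite !ffunE; ring.
Qed.

Lemma Sp_9 : Sp (sc 3 E0).
Proof.
have [h1 h2 h3] := unitw; have [u1 u2 u3] := unit1; have [v1 v2 v3] := unitw2.
rewrite (_ : sc 3 E0 = - (Tv i1 i0 1 + Tv i1 i0 omega + Tv i1 i0 (-1 - omega))).
  by apply: Sp_opp; apply: Sp_add; [apply: Sp_add|]; apply: Sp_gen; apply: goodd_T.
by apply/ffunP => k; rewrite !ffunE; ring.
Qed.

Lemma Sp_e3 (w : 'I_12 -> algC) : (forall k, isE (w k)) -> thE (\sum_k w k) ->
  Sp [ffun k => 3 * w k].
Proof.
move=> hw hs.
have : forall k, exists ab : int * int, w k = Eab ab.1 ab.2.
  by move=> k; have [a [b ->]] := hw k; exists (a, b).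
case/fin_all_exists => f hf.
have hsum : \sum_k w k = Eab (\sum_k (f k).1) (\sum_k (f k).2).
  rewrite /Eab !rmorph_sum /= mulr_suml -big_split /=; apply: eq_bigr => k _; exact: hf.
move: hs; rewrite hsum thE_Eab => /dvdzP [q hq].
have ediff : forall i, Sp (e3 i (w i) - sc ((f i).1 + (f i).2)%:~R E0).
  move=> i; rewrite (_ : _ - _ = sc (f i).1%:~R (e3 i 1 - E0) + sc (f i).2%:~R (e3 i omega - E0)).
    by apply: Sp_add; apply: Sp_sc; [apply: Sp_e3_1 | apply: Sp_e3_w].
  by apply/ffunP => k; rewrite !ffunE hf /Eab rmorphD /=; ring.
have -> : [ffun k => 3 * w k] = \sum_i (e3 i (w i) - sc ((f i).1 + (f i).2)%:~R E0)
            + sc q%:~R (sc 3 E0).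
  apply/ffunP => k; rewrite !ffunE sum_ffunE.
  rewrite (eq_bigr (fun i => 3 * w i * dlt i k - ((f i).1 + (f i).2)%:~R * E0 k)); last first.
    by move=> i _; rewrite !ffunE.
  rewrite sumrB -mulr_suml -rmorph_sum /= big_split /= hq.
  rewrite (sum1 (i := k)); last by move=> i hi; rewrite /dlt eq_sym (negbTE hi) mulr0.
  by rewrite /E0 ffunE /dlt eqxx rmorphM /= mulr1; ring.
by apply: Sp_add; [apply: Sp_sum | apply: Sp_sc; apply: Sp_9].
Qed.

Definition z0 (k : 'I_12) : algC := if (k < 2)%N then -1 else 0.

Lemma sum_z0 : \sum_k z0 k = -2.
Proof.
have h01 : i0 != i1 by [].
rewrite (sum2 h01) /z0 /=; last by move=> k; case: k => [[|[|k]] hk].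
by rewrite -opprD.
Qed.

Lemma Leech'_Sp v : Leech' v -> Sp v.
Proof.
move=> [m [c [z [hc hz hs hv]]]].
have [a ha] := (golayP c).1 hc.
pose t k := ((c k - gS a k) %/ 3)%Z.
have ht : forall k, c k = gS a k + 3 * t k.
  by move=> k; have := divzK (ha k); rewrite /t mulrC => ->; ring.
pose z2 k := z k - m%:~R * z0 k + theta * (t k)%:~R.
have -> : v = sc m%:~R w0 + \sum_j sc (a j)%:~R (Thv j) + [ffun k => 3 * z2 k].
  apply/ffunP => k; rewrite !ffunE sum_ffunE hv (ht k) /z2.
  rewrite (eq_bigr (fun j => theta * (a j * golayGen j k)%:~R)); last first.
    by move=> j _; rewrite !ffunE rmorphM /=; ring.
  rewrite -mulr_sumr -rmorph_sum /= -/(gS a k) /z0.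
  by case: ifP => _; rewrite !rmorphD !rmorphM /=; ring.
apply: Sp_add; first apply: Sp_add.
- by apply: Sp_sc; apply: Sp_gen; apply: goodd_w0.
- by apply: Sp_sum => j; apply: Sp_sc; apply: Sp_gen; apply: goodd_Th.
apply: Sp_e3.
  by move=> k; rewrite /z2 /z0; case: ifP => _; isEt.
have := thE_add hs (thE_add (thE_theta (isE_mul isE_theta (isE_int (- m)))) (thE_theta (isE_int (\sum_k t k)))).
congr thE.
rewrite /z2 !big_split /= sumrN -mulr_sumr -mulr_sumr -rmorph_sum /= sum_z0.
have := theta2; rewrite expr2 => h2.
by rewrite mulrA h2 rmorphN /=; ring.
Qed.

Lemma good_inPsi l b : good l b -> inPsi (rvec l b).
Proof. by move=> h; apply/inPsi_good; exists l, b. Qed.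

Lemma reach (ds : seq V) : (forall d, d \in ds -> goodd d) ->
  forall l b, good l b -> l = \sum_(d <- ds) d ->
  exists b0, good 0 b0 /\ conn (rvec l b) (rvec 0 b0).
Proof.
elim: ds => [|d ds IH] hds l b hg hl.
  by exists b; rewrite hl big_nil in hg *; split => //; apply: conn_refl.
have [hd1 hd2] := goodd_opp (hds d (mem_head _ _)).
have [hg' hadj] := step hg hd1 hd2 (or_introl erefl).
move: hg' hadj; set b' := (X in good _ X) => hg' hadj.
have e : l + - d = \sum_(x <- ds) x by rewrite hl big_cons addrC addKr.
rewrite e in hg' hadj.
have hds' : forall x, x \in ds -> goodd x by move=> x hx; apply: hds; rewrite inE hx orbT.
have [b0 [hb0 hc]] := IH hds' _ _ hg' erefl.
exists b0; split => //; apply: conn_trans hc.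
by apply: conn_step => //; apply: good_inPsi.
Qed.

Definition i2 : 'I_12 := @Ordinal 12 2 isT.

Lemma down b : good 0 b -> conn (rvec 0 b) (rvec 0 (b - 1)).
Proof.
move=> hg.
have [u1 u2 u3] := unit1.
have g1 : goodd (Tv i0 i1 1) by apply: goodd_T.
have g2 : goodd (Tv i1 i2 1) by apply: goodd_T.
have e12 : Tv i0 i1 1 + Tv i1 i2 1 = Tv i0 i2 1 by apply/ffunP => k; rewrite !ffunE; ring.
have g12 : goodd (Tv i0 i2 1) by apply: goodd_T.
have [g3a g3b] := goodd_opp g12.
have F12 : F (Tv i0 i1 1) (Tv i1 i2 1) = 3.
  rewrite /leechForm (sum1 (i := i1)).
    rewrite !ffunE /dlt /= (rmorphM Num.conj) /= conj3 (rmorphB Num.conj) /= !conjC_nat; fld.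
  move=> k hk; rewrite !ffunE /dlt (negbTE hk) /=.
  by case: (eqVneq k i0) => [->|h0] //=; rewrite ?(negbTE h0) /=; rewrite ?conjC_nat; ring.
have [h1 a1] := step hg g1.1 g1.2 (or_introl erefl).
rewrite F_0l (rmorph0 Num.conj) subrr mul0r addr0 add0r in h1 a1.
have [h2 a2] := step h1 g2.1 g2.2 (or_introl erefl).
rewrite F12 conjC_nat subrr mul0r addr0 in h2 a2.
have [h3 a3] := step h2 g3a g3b (or_intror erefl).
have ex : F (Tv i0 i1 1 + Tv i1 i2 1) (- Tv i0 i2 1) = 6.
  by rewrite e12 F_oppr g12.2 opprK.
rewrite ex conjC_nat subrr mul0r addr0 in h3 a3.
have p0 : Tv i0 i1 1 + Tv i1 i2 1 - Tv i0 i2 1 = 0 by rewrite e12 subrr.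
have bv : b - 1%:~R - 1%:~R - (-1)%:~R = b - 1 by rewrite !rmorphN /=; ring.
rewrite p0 bv in h3 a3.
apply: (conn_trans (conn_step a1 (good_inPsi h1))).
apply: (conn_trans (conn_step a2 (good_inPsi h2))).
exact: (conn_step a3 (good_inPsi h3)).
Qed.


Lemma Leech'0 : Leech' 0.
Proof.
exists 0, (fun _ => 0), (fun _ => 0); split.
- exact: golay0.
- by move=> k; apply: isE_0.
- by rewrite big1 // subrr; apply: thE_0.
- by move=> k; rewrite ffunE !mulr0 !addr0.
Qed.

Lemma good0 (x : int) : good 0 (1 / 2 + x%:~R).
Proof.
split; first exact: Leech'_inLeech Leech'0.
exists (1 + 2 * x), (- (1 + x)); split.
  by rewrite !rmorphD !rmorphM /=; fld.
by rewrite F_0l !rmorphN !rmorphD /=; fld.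
Qed.

Definition base : Lvec := rvec 0 (1 / 2).

Lemma to_base_nat (n : nat) :
  conn (rvec 0 (1 / 2 + n%:R)) base /\ conn (rvec 0 (1 / 2 - n%:R)) base.
Proof.
elim: n => [|n [IH1 IH2]].
  by rewrite addr0 subr0; split; apply: conn_refl.
have gp : good 0 (1 / 2 + (n.+1)%:R) by have := good0 n.+1; rewrite pmulrn.
have gm : good 0 (1 / 2 - n%:R) by have := good0 (- n%:Z); rewrite rmorphN /= pmulrn.
split.
  apply: conn_trans IH1.
  have := down gp; congr conn; congr rvec; rewrite mulrSr; ring.
apply: conn_trans IH2.
apply: conn_sym; last first.
  by have := down gm; congr conn; congr rvec; rewrite mulrSr; ring.
by have := good0 (- n.+1%:Z); rewrite rmorphN /= pmulrn => h; apply: good_inPsi.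
Qed.

Lemma to_base b : good 0 b -> conn (rvec 0 b) base.
Proof.
move=> [_ [B [N [hB hN]]]].
rewrite F_0l in hN.
have eb : b = 1 / 2 + (- N - 1)%:~R.
  by rewrite !(rmorphB, rmorphD, rmorphN) /= -hN; fld.
rewrite eb; case: (- N - 1) => n.
  by rewrite -pmulrn; case: (to_base_nat n).
by rewrite NegzE rmorphN /= -pmulrn -[_ + - _]/(_ - _); case: (to_base_nat n.+1).
Qed.

Theorem mainTheorem4 (a b : Lvec) :
  inPsi a -> inPsi b ->
  exists s : seq Lvec,
    [/\ path psiAdj a s, last a s = b & forall x, x \in s -> inPsi x].
Proof.
move=> ha hb.
have tb : forall x, inPsi x -> conn x base.
  move=> x /inPsi_good [l [c [hg ->]]].
  have [ds [hds hl]] := Leech'_Sp (inLeech_Leech' hg.1).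
  have [b0 [hb0 hc]] := reach hds hg hl.
  exact: conn_trans hc (to_base hb0).
have hbase : inPsi base by have := good0 0; rewrite addr0 => h; apply: good_inPsi.
have h := conn_trans (tb a ha) (conn_sym hb (tb b hb)).
exact: h.
Qed.
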